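(* Let $F$ be a field, $d\ge1$, and $x:\mathbb Z^2\to F$ such that $\det M^{(d+1)}_{j,k}=1$ and $\det M^{(d)}_{j,k}\neq0$ for all $j,k\in\mathbb Z$. Then there exist functions $d_1,\dots,d_d:\mathbb Z\to F$ such that for all $j,k\in\mathbb Z$, $$0=x_{j,k-d}+\sum_{i=1}^d(-1)^i\,d_i(j-k)\,x_{j-i,k+i-d}-(-1)^d\,x_{j-d-1,k+1}.$$ That is, the coefficients of this linear recursion depend only on $j-k$ and not on $j+k$.
   Context: For $m\ge1$, $M^{(m)}_{j,k}$ denotes the $m\times m$ matrix whose $(r,c)$ entry ($0\le r,c\le m-1$) is $x_{j-r+c,\;k-(m-1)+r+c}$. *)

(* Defs.v *)
From HB Require Import structures.
From mathcomp Require Import all_boot all_order all_algebra.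
Set Implicit Arguments. Unset Strict Implicit. Unset Printing Implicit Defensive.
Import Order.TTheory GRing.Theory Num.Theory.
Local Open Scope ring_scope.

Definition Mmat (F : fieldType) (x : int -> int -> F) (m : nat) (j k : int)
  : 'M[F]_m :=
  \matrix_(r < m, c < m)
     x (j - (nat_of_ord r)%:Z + (nat_of_ord c)%:Z)
       (k - (m.-1)%:Z + (nat_of_ord r)%:Z + (nat_of_ord c)%:Z).

(* Main.v *)
Require Import Defs.
From HB Require Import structures.
From mathcomp Require Import all_boot all_order all_algebra.
From mathcomp Require Import zify ring.
Import Order.TTheory GRing.Theory Num.Theory.
Local Open Scope ring_scope.
Set Implicit Arguments. Unset Strict Implicit.

Section Core.
Variable F : fieldType.

Lemma cofactor_indep n (A B : 'M[F]_n) i0 j :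
  (forall i k, i != i0 -> A i k = B i k) -> cofactor A i0 j = cofactor B i0 j.
Proof.
move=> h; rewrite /cofactor; congr (_ * \det _); apply/matrixP => i k.
by rewrite !mxE h // eq_sym neq_lift.
Qed.

Lemma det_row_lin n (A : 'M[F]_n) i0 (a : 'rV[F]_n) :
  \det (\matrix_(i, k) if i == i0 then a 0 k else A i k)
  = \sum_k a 0 k * cofactor A i0 k.
Proof.
rewrite (expand_det_row _ i0); apply: eq_bigr => k _.
rewrite mxE eqxx; congr (_ * _); apply: cofactor_indep => i l /negPf h.
by rewrite mxE h.
Qed.

Variable d : nat.

Definition Nm (a : 'rV[F]_d.+1) : 'M[F]_d.+1 :=
  \matrix_(i, j) if (i < d)%N then ((j : nat) == i.+1)%:R else a 0 j.

Definition kap : F := cofactor (Nm 0) ord_max 0.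

Lemma detNm a : \det (Nm a) = a 0 0 * kap.
Proof.
have E : forall b, \det (Nm b) = \sum_k b 0 k * cofactor (Nm 0) ord_max k.
  move=> b; rewrite -det_row_lin; congr (\det _); apply/matrixP => i k.
  rewrite !mxE; case: (eqVneq i ord_max) => [->|ne]; first by rewrite ltnn.
  have -> : (i < d)%N by move: (ltn_ord i) ne; rewrite -val_eqE /=; lia.
  by [].
rewrite E big_ord_recl big1 ?addr0 // => k _.
have : \det (Nm (delta_mx 0 (lift ord0 k))) = 0.
  have hk : (k < d)%N by [].
  apply: (@determinant_alternate _ _ _ (Ordinal (leq_trans hk (leqnSn d))) ord_max).
    by rewrite -val_eqE /= neq_ltn hk.
  move=> j; rewrite !mxE /= hk ltnn /=.
  by rewrite -[j == lift _ _]val_eqE.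
rewrite E (bigD1 (lift ord0 k)) //= big1 ?addr0.
  by rewrite mxE !eqxx mul1r => ->; rewrite mulr0.
by move=> j /negPf nj; rewrite mxE nj andbF mul0r.
Qed.

Definition win (Y : nat -> int -> F) (i0 m : nat) (q : int) : 'M[F]_m :=
  \matrix_(i < m, r < m) Y (i0 + r)%N (q + (i : nat)%:Z).

Lemma L1 (Y : nat -> int -> F) i0 (hT : forall q, \det (win Y i0 d.+1 q) = 1) q :
  exists a : 'rV[F]_d.+1,
    (forall r : 'I_d.+1, \sum_i a 0 i * Y (i0 + r)%N (q + (i : nat)%:Z)
                         = Y (i0 + r)%N (q + (d.+1)%:Z)) /\ a 0 0 * kap = 1.
Proof.
set A := win Y i0 d.+1 q.
have uA : A \in unitmx by rewrite unitmxE hT unitr1.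
set v := \row_(r < d.+1) Y (i0 + r)%N (q + (d.+1)%:Z).
have eqv : (v *m invmx A) *m A = v by rewrite mulmxKV.
exists (v *m invmx A); split.
  move=> r; have /matrixP/(_ 0 r) := eqv; rewrite !mxE => <-.
  by apply: eq_bigr => i _; congr (_ * _); rewrite /A mxE.
set a := v *m invmx A.
have eN : Nm a *m A = win Y i0 d.+1 (q + 1).
  apply/matrixP => i r; rewrite !mxE.
  under eq_bigr => j _ do rewrite /Nm mxE.
  case hi: (i < d)%N.
    have hi1 : (i.+1 < d.+1)%N by [].
    rewrite (bigD1 (Ordinal hi1)) //= big1.
      by rewrite /A !mxE eqxx mul1r addr0; congr (Y _ _); rewrite /=; lia.
    move=> j nj.
    have -> : ((j : nat) == i.+1) = false.
      by apply/negP => /eqP h; move/negP: nj; apply; rewrite -val_eqE /= h.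
    by rewrite mul0r.
  have ei : (i : nat) = d by move: (ltn_ord i) hi => /=; lia.
  have /matrixP/(_ 0 r) := eqv; rewrite -/a !mxE => ->.
  by rewrite ei; congr (Y _ _); lia.
have := congr1 determinant eN; rewrite det_mulmx hT hT mulr1 detNm //.
Qed.

Lemma step2 (Y : nat -> int -> F)
  (hT0 : forall q, \det (win Y 0 d.+1 q) = 1)
  (hT1 : forall q, \det (win Y 1 d.+1 q) = 1)
  (hM : forall q, \det (win Y 1 d q) != 0) q :
  exists g : 'rV[F]_d.+1, forall r : 'I_d.+2,
    \sum_i g 0 i * Y r (q + (i : nat)%:Z) = Y r (q + (d.+1)%:Z).
Proof.
have [aT [eT kT]] := L1 hT0 q.
have [aB [eB kB]] := L1 hT1 q.
have k0 : kap != 0 by apply/eqP => k0; move: kT; rewrite k0 mulr0 => /eqP; rewrite eq_sym oner_eq0.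
have e00 : aT 0 0 = aB 0 0 by apply: (mulIf k0); rewrite kT kB.
set dl := \row_(i < d) (aT - aB) 0 (lift ord0 i).
have hd0 : dl *m win Y 1 d (q + 1) = 0.
  apply/matrixP => z r; rewrite !mxE.
  have h1 := eT (lift ord0 r).
  have h2 := eB (widen_ord (leqnSn d) r).
  have : \sum_(i < d.+1) (aT - aB) 0 i * Y (1 + r)%N (q + (i : nat)%:Z) = 0.
    under eq_bigr => i _ do rewrite !mxE mulrBl.
    rewrite sumrB /= add0n in h1 *; rewrite h1 h2 /=. by rewrite subrr.
  rewrite big_ord_recl !mxE e00 subrr mul0r add0r => H; apply: eq_trans H.
  apply: eq_bigr => i _; rewrite !mxE; congr (_ * Y _ _); rewrite lift0; lia.
have dl0 : dl = 0.
  have uW : win Y 1 d (q + 1) \in unitmx by rewrite unitmxE unitfE hM.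
  by rewrite -(mulmxK uW dl) hd0 mul0mx.
have eTB : aT = aB.
  apply/rowP => i; idtac.
  case: (unliftP ord0 i) => [j ->|->] //.
  have /rowP/(_ j) := dl0; rewrite !mxE => /eqP; rewrite subr_eq0 => /eqP.
  done.
exists aT => r; case: (unliftP ord0 r) => [j ->|->].
  have := eB j; rewrite -eTB /= add1n => <-.
  by apply: eq_bigr.
by have := eT ord0; rewrite /= => <-.
Qed.

Definition U (Y : nat -> int -> F) (q : int) : 'M[F]_(d.+1, d.+2) :=
  \matrix_(i < d.+1, r < d.+2) Y r (q + (i : nat)%:Z).

Lemma rankU (Y : nat -> int -> F) (hT0 : forall q, \det (win Y 0 d.+1 q) = 1) q :
  \rank (U Y q) = d.+1.
Proof.
apply/eqP; rewrite eqn_leq rank_leq_row /=.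
set P : 'M[F]_(d.+2, d.+1) := \matrix_(r, c) ((r : nat) == c)%:R.
have eP : U Y q *m P = win Y 0 d.+1 q.
  apply/matrixP => i c; rewrite !mxE.
  rewrite (bigD1 (widen_ord (leqnSn _) c)) //= big1.
    by rewrite !mxE eqxx mulr1 addr0.
  move=> j nj; rewrite !mxE.
  have -> : ((j : nat) == c) = false.
    by apply/negP => /eqP h; move/negP: nj; apply; rewrite -val_eqE /= h.
  by rewrite mulr0.
have uW : win Y 0 d.+1 q \in unitmx by rewrite unitmxE hT0 unitr1.
by rewrite -{1}(mxrank_unit uW) -eP mxrankM_maxl.
Qed.

Lemma Ueq (Y : nat -> int -> F)
  (hT0 : forall q, \det (win Y 0 d.+1 q) = 1)
  (hT1 : forall q, \det (win Y 1 d.+1 q) = 1)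
  (hM : forall q, \det (win Y 1 d q) != 0) q :
  (U Y (q + 1) == U Y q)%MS.
Proof.
have sub : (U Y (q + 1) <= U Y q)%MS.
  apply/row_subP => i.
  case hi: (i < d)%N.
    have hi1 : (i.+1 < d.+1)%N by [].
    have -> : row i (U Y (q + 1)) = row (Ordinal hi1) (U Y q).
      by apply/rowP => r; rewrite !mxE; congr (Y _ _); rewrite /=; lia.
    exact: row_sub.
  have ei : (i : nat) = d by move: (ltn_ord i) hi => /=; lia.
  have [g hg] := step2 hT0 hT1 hM q.
  have -> : row i (U Y (q + 1)) = g *m U Y q.
    apply/rowP => r; rewrite !mxE.
    have -> : q + 1 + (i : nat)%:Z = q + (d.+1)%:Z by rewrite ei; lia.
    rewrite -hg; apply: eq_bigr => j _; rewrite !mxE //.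
  exact: submxMl.
have := mxrank_leqif_eq sub; case=> _ <-.
by rewrite !rankU.
Qed.

Section Strip.
Variable Y : nat -> int -> F.
Hypothesis hT0 : forall q, \det (win Y 0 d.+1 q) = 1.
Hypothesis hT1 : forall q, \det (win Y 1 d.+1 q) = 1.
Hypothesis hM : forall q, \det (win Y 1 d q) != 0.

Lemma allsub s : (U Y s <= U Y 0)%MS.
Proof.
have st q : (U Y (q + 1) <= U Y q)%MS /\ (U Y q <= U Y (q + 1))%MS.
  by have /andP[] := Ueq hT0 hT1 hM q.
have pos n : (U Y n%:Z <= U Y 0)%MS.
  elim: n => [|n IH]; first exact: submx_refl.
  have -> : (n.+1)%:Z = n%:Z + 1 by lia.
  exact: submx_trans (st _).1 IH.
have neg n : (U Y (- n%:Z) <= U Y 0)%MS.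
  elim: n => [|n IH]; first by rewrite oppr0; exact: submx_refl.
  apply: submx_trans IH.
  have E : - n%:Z = - (n.+1)%:Z + 1 by lia.
  by rewrite E; exact: (st _).2.
by case: s => n; [exact: pos | rewrite NegzE; exact: neg].
Qed.

Definition R (a : 'rV[F]_d.+2) : 'M[F]_d.+2 :=
  \matrix_(i, r) if (i < d.+1)%N then Y r (i : nat)%:Z else a 0 r.

Definition cvec (r : 'I_d.+2) : F := cofactor (R 0) ord_max r.

Lemma detR a : \det (R a) = \sum_r a 0 r * cvec r.
Proof.
rewrite -det_row_lin; congr (\det _); apply/matrixP => i k; rewrite !mxE.
case: (eqVneq i ord_max) => [->|ne]; first by rewrite ltnn.
have -> : (i < d.+1)%N by move: (ltn_ord i) ne; rewrite -val_eqE /=; lia.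
by [].
Qed.

Lemma detRsub a : (a <= U Y 0)%MS -> \det (R a) = 0.
Proof.
case/submxP => D ->; rewrite detR.
under eq_bigr => r _ do rewrite mxE mulr_suml.
rewrite exchange_big /= big1 // => i _.
have : \det (R (row i (U Y 0))) = 0.
  have hi : (i < d.+2)%N by apply: leq_trans (ltn_ord i) _.
  apply: (@determinant_alternate _ _ _ (Ordinal hi) ord_max).
    by rewrite -val_eqE /= neq_ltn ltn_ord.
  by move=> r; rewrite !mxE /= ltn_ord ltnn add0r.
rewrite detR => H.
transitivity (D 0 i * \sum_r row i (U Y 0) 0 r * cvec r); last by rewrite H mulr0.
by rewrite mulr_sumr; apply: eq_bigr => r _; rewrite !mxE mulrA.
Qed.

Lemma cvec_rel (s : int) : \sum_(r < d.+2) Y r s * cvec r = 0.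
Proof.
have := detRsub (submx_trans (row_sub 0 (U Y s)) (allsub s)).
rewrite detR => H; apply: eq_trans H; apply: eq_bigr => r _; rewrite !mxE addr0 //.
Qed.

Lemma cvec_last : cvec ord_max = 1.
Proof.
rewrite /cvec /cofactor addnn -signr_odd odd_double expr0 mul1r.
rewrite -[RHS](hT0 0); congr (\det _); apply/matrixP => i r.
have b x : (x < d.+1)%N -> bump d.+1 x = x by move=> h; rewrite /bump leqNgt h /=; lia.
by rewrite !mxE /= !b ?ltn_ord // !add0n !add0r.
Qed.

Lemma cvec_first : cvec 0 = (-1) ^+ d.+1.
Proof.
rewrite /cvec /cofactor addn0 /=.
rewrite -[RHS]mulr1 -(hT1 0); congr (_ * \det _); apply/matrixP => i r.
have b x : (x < d.+1)%N -> bump d.+1 x = x by move=> h; rewrite /bump leqNgt h /=; lia.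
rewrite !mxE /= !b ?ltn_ord // ltn_ord add0r.
Qed.
End Strip.
End Core.


Definition Yt (F : fieldType) (d : nat) (x : int -> int -> F) (t : int) (i : nat) (s : int) : F :=
  x (s - i%:Z) (s - t - d%:Z + i%:Z).

Lemma winMmat (F : fieldType) d (x : int -> int -> F) t i0 m q :
  win (Yt d x t) i0 m q
  = (Mmat x m (q - i0%:Z) (q - t - d%:Z + i0%:Z + (m.-1)%:Z))^T.
Proof.
apply/matrixP => i r; rewrite !mxE /Yt; congr (x _ _); lia.
Qed.

Lemma sgnsq (F : fieldType) n : (-1) ^+ n * (-1) ^+ n = 1 :> F.
Proof. by rewrite -exprD addnn -signr_odd odd_double. Qed.

Unset Implicit Arguments.
Theorem mainTheorem7 (F : fieldType) (d : nat) (hd : (1 <= d)%N)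
  (x : int -> int -> F)
  (h1 : forall j k : int, \det (Mmat x d.+1 j k) = 1)
  (h2 : forall j k : int, \det (Mmat x d j k) != 0) :
  exists D : nat -> int -> F,
    forall j k : int,
      0 = x j (k - d%:Z)
          + \sum_(1 <= i < d.+1) (-1) ^+ i * D i (j - k)
                * x (j - i%:Z) (k + i%:Z - d%:Z)
          - (-1) ^+ d * x (j - d%:Z - 1) (k + 1).
Proof.
exists (fun i t => (-1) ^+ i * (-1) ^+ d.+1 * @cvec F d (Yt d x t) (inord i)) => j k.
set t := j - k.
have hT0 q : \det (win (Yt d x t) 0 d.+1 q) = 1 by rewrite winMmat det_tr h1.
have hT1 q : \det (win (Yt d x t) 1 d.+1 q) = 1 by rewrite winMmat det_tr h1.
have hM q : \det (win (Yt d x t) 1 d q) != 0 by rewrite winMmat det_tr h2.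
have := cvec_rel hT0 hT1 hM j.
have eM : lift ord0 (@ord_max d) = ord_max by apply: val_inj.
rewrite big_ord_recl big_ord_recr /= eM.
have cl := cvec_last hT0. have cf := @cvec_first F d (Yt d x t) hT1.
rewrite cl cf => H.
have H' := congr1 (fun z => (-1) ^+ d.+1 * z) H; rewrite /= mulr0 in H'.
apply: eq_trans (esym H') _.
rewrite !mulrDr addrA; congr (_ + _ + _).
- rewrite mulrCA sgnsq mulr1 /Yt /t; congr (x _ _); lia.
- rewrite big_add1 /= big_mkord mulr_sumr; apply: eq_bigr => i _.
  have ei : inord i.+1 = lift ord0 (widen_ord (leqnSn d) i) :> 'I_d.+2.
    apply: val_inj => /=; rewrite inordK /bump /=; have := ltn_ord i; lia.
  rewrite ei /Yt /t.
  have -> : x (j - (bump 0 i)%:Z) (j - (j - k) - d%:Z + (bump 0 i)%:Z)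
          = x (j - (i.+1)%:Z) (k + (i.+1)%:Z - d%:Z).
    by congr (x _ _); rewrite /bump /=; lia.
  rewrite !mulrA sgnsq mul1r; ring.
- rewrite mulr1 exprS mulN1r mulNr /Yt /t; congr (- (_ * x _ _)); rewrite /bump /=; lia.
Qed.
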